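(* Let $\mathcal{M}$ and $\mathcal{N}$ be matroids on the same finite ground set $V$, and let $k\ge1$ be an integer. If $k\le\nu(\mathcal{M},\mathcal{N})-1$, then $\mathbf{RG}(\mathcal{M},\mathcal{N};k)$ is connected.
   Context: $\nu(\mathcal{M},\mathcal{N})$ is the maximum size of a set independent in both $\mathcal{M}$ and $\mathcal{N}$. $\mathbf{RG}(\mathcal{M},\mathcal{N};k)$ is the graph whose vertices are the common independent sets of $\mathcal{M}$ and $\mathcal{N}$ of cardinality $k$, two such sets $S,T$ being adjacent if $S\cup T$ is an independent set of $\mathcal{M}$ of cardinality $k+1$. *)

(* Defs.v *)
From mathcomp Require Import all_boot.
Set Implicit Arguments. Unset Strict Implicit. Unset Printing Implicit Defensive.

Record matroid (V : finType) := Matroid {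
  indep : pred {set V};
  indep_set0 : indep set0;
  indep_subset : forall A B : {set V}, B \subset A -> indep A -> indep B;
  indep_augment : forall A B : {set V}, indep A -> indep B -> #|A| < #|B| ->
    exists2 x, x \in B :\: A & indep (x |: A)
}.

Definition common_indep (V : finType) (M N : matroid V) (S : {set V}) : bool :=
  indep M S && indep N S.

Definition nu (V : finType) (M N : matroid V) : nat :=
  \max_(S : {set V} | common_indep M N S) #|S|.

Definition RG_vertex (V : finType) (M N : matroid V) (k : nat) (S : {set V}) : bool :=
  common_indep M N S && (#|S| == k).

Definition RG_adj (V : finType) (M N : matroid V) (k : nat) : rel {set V} :=
  fun S T => [&& RG_vertex M N k S, RG_vertex M N k T,
                 indep M (S :|: T) & #|S :|: T| == k.+1].

Definition RG_connected (V : finType) (M N : matroid V) (k : nat) : Prop :=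
  forall S T : {set V}, RG_vertex M N k S -> RG_vertex M N k T ->
    connect (RG_adj M N k) S T.

(* Main.v *)
Require Import Defs.
From mathcomp Require Import all_boot.
From mathcomp Require Import zify.

Lemma extend_indep (V : finType) (M : matroid V) (A B : {set V}) (n : nat) :
  indep M A -> indep M B -> #|A| <= n -> n <= #|B| ->
  exists A', [/\ indep M A', A \subset A', A' \subset A :|: B & #|A'| = n].
Proof.
move=> iA iB; elim: n => [|n IH] hA hB.
  exists A; split=> //; first exact: subsetUl.
  by apply/eqP; rewrite -leqn0.
case: (ltnP #|A| n.+1) => h; last first.
  exists A; split=> //; first exact: subsetUl.
  by apply/eqP; rewrite eqn_leq hA h.
have [A' [iA' sAA' sA'AB cA']] := IH h (ltnW hB).
have hlt : #|A'| < #|B| by rewrite cA'.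
have [x] := indep_augment iA' iB hlt.
rewrite in_setD => /andP [xA' xB] ixA'.
exists (x |: A'); split=> //.
- exact: subset_trans sAA' (subsetUr _ _).
- by rewrite subUset sub1set in_setU xB orbT sA'AB.
- by rewrite cardsU1 xA' cA'.
Qed.

Lemma card_subset_exists (V : finType) (J : {set V}) (n : nat) :
  n <= #|J| -> exists J' : {set V}, J' \subset J /\ #|J'| = n.
Proof.
elim: n => [|n IH] h; first by exists (set0 : {set V}); rewrite sub0set cards0.
have [J' [sJ cJ]] := IH (ltnW h).
have hp : J' \proper J by rewrite properEcard sJ cJ.
have [_ [x xJ xJ']] := properP hp.
exists (x |: J'); split; first by rewrite subUset sub1set xJ sJ.
by rewrite cardsU1 (negbTE xJ') cJ.
Qed.

Lemma RG_adj_sym (V : finType) (M N : matroid V) (k : nat) : symmetric (RG_adj M N k).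
Proof.
move=> S T; rewrite /RG_adj setUC.
by case: (RG_vertex M N k S); case: (RG_vertex M N k T).
Qed.

Lemma walk_to_J (V : finType) (M N : matroid V) (k : nat) (J : {set V}) :
  common_indep M N J -> #|J| = k.+1 ->
  forall m S, RG_vertex M N k S -> k - #|S :&: J| <= m ->
  exists P, [/\ connect (RG_adj M N k) S P, P \subset J & RG_vertex M N k P].
Proof.
move=> /andP [iMJ iNJ] cJ; elim=> [|m IH] S vS hm.
- exists S; split=> //.
  move: vS => /andP [_ /eqP cS].
  have hle : #|S :&: J| <= #|S| by apply: subset_leq_card; apply: subsetIl.
  have e : #|S :&: J| = #|S| by lia.
  have := subset_leqif_cards (subsetIl S J).
  by move=> [_]; rewrite e eqxx => /esym/eqP/setIidPl.
case sSJ: (S \subset J); first by exists S; split.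
move: (vS) => /andP [/andP [iMS iNS] /eqP cS].
have hI : #|S :&: J| < k.
  have hle : #|S :&: J| <= #|S| by apply: subset_leq_card; apply: subsetIl.
  rewrite ltn_neqAle -cS hle andbT.
  have := subset_leqif_cards (subsetIl S J).
  by move=> [_ ->]; apply/negP => /eqP/setIidPl; rewrite sSJ.
have hlt : #|S| < #|J| by rewrite cS cJ.
have [x] := indep_augment iMS iMJ hlt.
rewrite in_setD => /andP [xS xJ] iMxS.
have xSJ : x \notin S :&: J by rewrite in_setI (negbTE xS).
have iNA : indep N (x |: (S :&: J)).
  apply: indep_subset iNJ; by rewrite subUset sub1set xJ subsetIr.
have cA : #|x |: (S :&: J)| = #|S :&: J|.+1 by rewrite cardsU1 xSJ.
have h1 : #|x |: (S :&: J)| <= k by rewrite cA.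
have h2 : k <= #|S| by rewrite cS.
have [A' [iNA' sAA' sA' cA']] := @extend_indep _ N _ _ k iNA iNS h1 h2.
have sA'xS : A' \subset x |: S.
  apply: subset_trans sA' _.
  apply/subsetP => y; rewrite !inE => /orP [/orP [-> | /andP [-> _]] | ->] //;
  by rewrite orbT.
have xA' : x \in A' by move/subsetP: sAA'; apply; apply: setU11.
have vA' : RG_vertex M N k A'.
  by rewrite /RG_vertex /common_indep iNA' (indep_subset sA'xS iMxS) cA' eqxx.
have eU : S :|: A' = x |: S.
  apply/eqP; rewrite eqEsubset subUset subsetUr sA'xS /=.
  by rewrite subUset sub1set in_setU xA' orbT subsetUl.
have adj : RG_adj M N k S A'.
  by rewrite /RG_adj vS vA' eU iMxS cardsU1 xS cS /=.
have hm' : k - #|A' :&: J| <= m.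
  have : #|x |: (S :&: J)| <= #|A' :&: J|.
    apply: subset_leq_card; rewrite subsetI sAA' subUset sub1set xJ subsetIr //.
  rewrite cA => h; move: hm h; move: #|S :&: J| #|A' :&: J| => a b.
  clear; lia.
have [P [cP sPJ vP]] := IH A' vA' hm'.
exists P; split=> //.
exact: connect_trans (connect1 adj) cP.
Qed.

Theorem corollary5p4 (V : finType) (M N : matroid V) (k : nat) :
  1 <= k -> k <= nu M N - 1 -> RG_connected M N k.
Proof.
move=> k1 knu.
have [J0 /andP [iMJ0 iNJ0] cJ0] : exists2 J0 : {set V}, common_indep M N J0 & k < #|J0|.
  case: (boolP [exists S : {set V}, common_indep M N S && (k < #|S|)]).
    by move=> /existsP [S /andP [h1 h2]]; exists S.
  move=> /existsPn hn.
  have : nu M N <= k.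
    apply/bigmax_leqP => S hS; have := hn S; rewrite hS /= => /negbTE.
    by rewrite ltnNge => /negbFE.
  lia.
have [J [sJ cJ]] := @card_subset_exists _ J0 k.+1 cJ0.
have cJ' : common_indep M N J.
  by rewrite /common_indep (indep_subset sJ iMJ0) (indep_subset sJ iNJ0).
have symc := sym_connect_sym (@RG_adj_sym _ M N k).
move=> S T vS vT.
have [P [cSP sPJ vP]] := @walk_to_J _ M N k J cJ' cJ k S vS (leq_subr _ _).
have [Q [cTQ sQJ vQ]] := @walk_to_J _ M N k J cJ' cJ k T vT (leq_subr _ _).
apply: connect_trans cSP _.
rewrite symc in cTQ.
apply: connect_trans _ cTQ.
case: (eqVneq P Q) => [-> // | nPQ].
apply: connect1.
move: (vP) (vQ) => /andP [_ /eqP cP] /andP [_ /eqP cQ].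
have eU : P :|: Q = J.
  apply/eqP; rewrite eqEcard subUset sPJ sQJ cJ /=.
  rewrite ltnNge; apply/negP => hle.
  have e1 : P :|: Q = P by apply/eqP; rewrite eq_sym eqEcard subsetUl cP.
  have e2 : P :|: Q = Q by apply/eqP; rewrite eq_sym eqEcard subsetUr cQ.
  by move: nPQ; rewrite -e1 {1}e2 eqxx.
by rewrite /RG_adj vP vQ eU cJ eqxx (indep_subset sJ iMJ0).
Qed.
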